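(* Under the Physarum dynamics, let $P$ be a path in $G$ from vertex $a$ to vertex $b$, traversed from $a$ to $b$; for each edge $e=(x,y)$ of $P$ in this traversal direction let $\Delta(e)=p_x-p_y$. Let $\Delta(P)=p_a-p_b$, $L(P)=\sum_{e\in P}L_e$ and $W(P)=\sum_{e\in P}L_e\ln D_e$. Then $\dot W(P)=\Delta(P)-L(P)+2\sum_{e\in P:\,\Delta(e)<0}|\Delta(e)|$. If there are real numbers $\bar\Delta$ and $\delta\ge0$ such that for all sufficiently large $t$, $\Delta(P)\le\bar\Delta$ and $\Delta(e)\ge-\delta$ for all $e\in P$, then there is a constant $K$ with $W(P)(t)\le K+(\bar\Delta-L(P)+2n\delta)t$ for all $t\ge0$. If $\Delta(P)\ge\bar\Delta$ for all sufficiently large $t$, then there is a constant $K$ with $W(P)(t)\ge K+(\bar\Delta-L(P))t$ for all $t\ge 0$.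
   Context: Let $G=(N,E)$ be a finite connected undirected graph with $n=|N|$ vertices and two distinct vertices $s_0$ (source) and $s_1$ (sink). Each edge $e$ has a fixed length $L_e>0$. Each edge has a time-dependent diameter $D_e(t)$ with $D_e(0)>0$, and resistance $R_e=L_e/D_e$. At each time $t$, the vertex potentials $p_v$ (normalized by $p_{s_1}=0$) are the solution of $\sum_{u\in\delta(v)}(p_v-p_u)/R_{uv}=b_v$ for all $v$, where $\delta(v)$ is the set of neighbours of $v$, $b_{s_0}=1$, $b_{s_1}=-1$, $b_v=0$ otherwise; for an edge $e=\{u,v\}$ with an arbitrarily fixed orientation $(u,v)$ the current is $Q_e=(p_u-p_v)/R_e=D_e(p_u-p_v)/L_e$. The diameters evolve by $\dot D_e(t)=|Q_e(t)|-D_e(t)$ for all $e\in E$ (the ''Physarum dynamics''). Paths are simple. *)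

(* Defs.v *)
From Stdlib Require Import Reals List Lra.
Open Scope R_scope.

Fixpoint sumR (m : nat) (f : nat -> R) : R :=
  match m with O => 0 | S k => sumR k f + f k end.

(* Graph: vertices 0..n-1; edges are the entries of E : list (nat*nat);
   edge i has the (arbitrarily fixed) orientation (src E i, dst E i). *)
Definition src (E : list (nat * nat)) (i : nat) : nat := fst (nth i E (0%nat, 0%nat)).
Definition dst (E : list (nat * nat)) (i : nat) : nat := snd (nth i E (0%nat, 0%nat)).

Definition simple_graph (n : nat) (E : list (nat * nat)) : Prop :=
  (forall i, (i < length E)%nat ->
     (src E i < n)%nat /\ (dst E i < n)%nat /\ src E i <> dst E i) /\
  (forall i j, (i < length E)%nat -> (j < length E)%nat -> i <> j ->
     ~ ((src E i = src E j /\ dst E i = dst E j) \/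
        (src E i = dst E j /\ dst E i = src E j))).

Definition adjacent_by (E : list (nat * nat)) (i u v : nat) : Prop :=
  (src E i = u /\ dst E i = v) \/ (src E i = v /\ dst E i = u).

Inductive connected_in (E : list (nat * nat)) : nat -> nat -> Prop :=
| conn_refl : forall v, connected_in E v v
| conn_step : forall u v w i, (i < length E)%nat -> adjacent_by E i u v ->
    connected_in E v w -> connected_in E u w.

Definition graph_connected (n : nat) (E : list (nat * nat)) : Prop :=
  forall u v, (u < n)%nat -> (v < n)%nat -> connected_in E u v.

Definition supply (s0 s1 v : nat) : R :=
  if Nat.eq_dec v s0 then 1 else if Nat.eq_dec v s1 then -1 else 0.

(* Kirchhoff equations: for every vertex v,
   sum over incident edges {u,v} of (p_v - p_u)/R_uv = b_v, and p_{s1} = 0.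
   cond i = 1/R_i = D_i/L_i. *)
Definition kirchhoff (n : nat) (E : list (nat * nat)) (cond : nat -> R)
    (p : nat -> R) (s0 s1 : nat) : Prop :=
  (forall v, (v < n)%nat ->
     sumR (length E) (fun i =>
       if Nat.eq_dec (src E i) v then cond i * (p v - p (dst E i))
       else if Nat.eq_dec (dst E i) v then cond i * (p v - p (src E i))
       else 0) = supply s0 s1 v) /\
  p s1 = 0.

Definition current (E : list (nat * nat)) (L : nat -> R) (D : nat -> R -> R)
    (p : R -> nat -> R) (t : R) (i : nat) : R :=
  D i t * (p t (src E i) - p t (dst E i)) / L i.

Definition right_cont (f : R -> R) (x : R) : Prop :=
  forall eps, 0 < eps -> exists del, 0 < del /\
    forall y, x <= y < x + del -> Rabs (f y - f x) < eps.

Definition physarum (n : nat) (E : list (nat * nat)) (L : nat -> R)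
    (D : nat -> R -> R) (p : R -> nat -> R) (s0 s1 : nat) : Prop :=
  simple_graph n E /\ graph_connected n E /\
  (s0 < n)%nat /\ (s1 < n)%nat /\ s0 <> s1 /\
  (forall i, (i < length E)%nat -> 0 < L i) /\
  (forall i, (i < length E)%nat -> 0 < D i 0) /\
  (forall i, (i < length E)%nat -> right_cont (D i) 0) /\
  (forall i, (i < length E)%nat -> forall t, 0 < t ->
     derivable_pt_lim (D i) t (Rabs (current E L D p t i) - D i t)) /\
  (forall t, 0 <= t -> kirchhoff n E (fun i => D i t / L i) (p t) s0 s1).

(* A simple path: vertex list vs = [v_0; ...; v_k] (distinct), edge list
   es = [e_0; ...; e_{k-1}] with e_j joining v_j and v_{j+1}; from a to b. *)
Definition is_path (n : nat) (E : list (nat * nat)) (vs es : list nat)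
    (a b : nat) : Prop :=
  length vs = S (length es) /\ NoDup vs /\
  (forall v, In v vs -> (v < n)%nat) /\
  nth 0 vs 0%nat = a /\ last vs 0%nat = b /\
  (forall j, (j < length es)%nat ->
     (nth j es 0 < length E)%nat /\
     adjacent_by E (nth j es 0%nat) (nth j vs 0%nat) (nth (S j) vs 0%nat)).

Definition path_edge_delta (p : R -> nat -> R) (vs : list nat) (t : R) (j : nat) : R :=
  p t (nth j vs 0%nat) - p t (nth (S j) vs 0%nat).

Definition path_length (L : nat -> R) (es : list nat) : R :=
  sumR (length es) (fun j => L (nth j es 0%nat)).

Definition path_W (L : nat -> R) (D : nat -> R -> R) (es : list nat) (t : R) : R :=
  sumR (length es) (fun j => L (nth j es 0%nat) * ln (D (nth j es 0%nat) t)).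

(* Main.v *)
Require Import Defs.
From Stdlib Require Import Reals List Lra Lia.
Open Scope R_scope.

Lemma sumR_ext m f g : (forall j, (j < m)%nat -> f j = g j) -> sumR m f = sumR m g.
Proof. induction m; simpl; intros H; auto. rewrite IHm by (intros; apply H; lia). rewrite H by lia. auto. Qed.

Lemma sumR_plus m f g : sumR m (fun j => f j + g j) = sumR m f + sumR m g.
Proof. induction m; simpl; [lra|]. rewrite IHm. lra. Qed.

Lemma sumR_minus m f g : sumR m (fun j => f j - g j) = sumR m f - sumR m g.
Proof. induction m; simpl; [lra|]. rewrite IHm. lra. Qed.

Lemma sumR_scal m c f : sumR m (fun j => c * f j) = c * sumR m f.
Proof. induction m; simpl; [lra|]. rewrite IHm. lra. Qed.

Lemma sumR_le m f g : (forall j, (j < m)%nat -> f j <= g j) -> sumR m f <= sumR m g.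
Proof. induction m; simpl; intros H; [lra|]. assert (f m <= g m) by (apply H; lia).
 assert (sumR m f <= sumR m g) by (apply IHm; intros; apply H; lia). lra. Qed.

Lemma sumR_const m c : sumR m (fun _ => c) = INR m * c.
Proof. induction m; simpl sumR; [simpl; lra|]. rewrite IHm, S_INR. lra. Qed.

Lemma sumR_tele m (q : nat -> R) : sumR m (fun j => q j - q (S j)) = q O - q m.
Proof. induction m; simpl; [lra|]. rewrite IHm. lra. Qed.

Lemma sumR_deriv m (f : nat -> R -> R) (f' : nat -> R) t :
  (forall j, (j < m)%nat -> derivable_pt_lim (f j) t (f' j)) ->
  derivable_pt_lim (fun s => sumR m (fun j => f j s)) t (sumR m f').
Proof.
  induction m; simpl; intros H.
  - apply derivable_pt_lim_const.
  - apply (derivable_pt_lim_plus (fun s => sumR m (fun j => f j s)) (f m)).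
    + apply IHm; intros; apply H; lia.
    + apply H; lia.
Qed.

Lemma last_nth_len (l : list nat) d : last l d = nth (pred (length l)) l d.
Proof. induction l as [|x l IH]; simpl; auto. destruct l as [|y l']; simpl; auto.
 Qed.

Lemma exp_ge1 s : 0 <= s -> 1 <= exp s.
Proof. intros H. destruct H as [H|H]. - rewrite <- exp_0. left. apply exp_increasing; auto.
 - subst. rewrite exp_0. lra. Qed.

Lemma ln_le' x y : 0 < x -> x <= y -> ln x <= ln y.
Proof. intros Hx [H|H]. left; apply ln_increasing; auto. subst; lra. Qed.

Section Edge.
Variables (Di : R -> R) (Qa : R -> R).
Hypothesis Hpos : 0 < Di 0.
Hypothesis Hrc : right_cont Di 0.
Hypothesis Hder : forall t, 0 < t -> derivable_pt_lim Di t (Qa t - Di t).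
Hypothesis HQ : forall t, 0 <= Qa t.

Lemma g_mono s t : 0 < s -> s <= t -> Di s * exp s <= Di t * exp t.
Proof.
  intros Hs [Hst|Hst]; [|subst; lra].
  destruct (MVT_cor2 (fun u => Di u * exp u) (fun u => Qa u * exp u) s t Hst) as [c [Hc1 Hc2]].
  - intros c Hc.
    assert (H := derivable_pt_lim_mult Di exp c _ _ (Hder c ltac:(lra)) (derivable_pt_lim_exp c)).
    replace (Qa c * exp c) with ((Qa c - Di c) * exp c + Di c * exp c) by ring. exact H.
  - assert (0 <= Qa c * exp c * (t - s)).
    { apply Rmult_le_pos; [apply Rmult_le_pos|]; auto. left; apply exp_pos. lra. }
    lra.
Qed.

Lemma D_lower t : 0 <= t -> Di 0 / 2 * exp (- t) <= Di t.
Proof.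
  intros Ht. destruct Ht as [Ht|Ht]; [|subst; rewrite Ropp_0, exp_0; lra].
  destruct (Hrc (Di 0 / 2) ltac:(lra)) as [del [Hdel Hd]].
  set (s := Rmin del t / 2).
  assert (Hs0 : 0 < s) by (unfold s; unfold Rmin; destruct Rle_dec; lra).
  assert (Hs1 : s <= t) by (unfold s; assert (Rmin del t <= t) by apply Rmin_r; lra).
  assert (Hs2 : s < del) by (unfold s; assert (Rmin del t <= del) by apply Rmin_l; lra).
  specialize (Hd s ltac:(lra)). apply Rabs_def2 in Hd.
  assert (G := g_mono s t Hs0 Hs1).
  assert (E1 := exp_ge1 s ltac:(lra)).
  assert (Di s <= Di s * exp s) by (rewrite <- (Rmult_1_r (Di s)) at 1; apply Rmult_le_compat_l; lra).
  assert (Di 0 / 2 <= Di t * exp t) by lra.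
  assert (Hx : exp t * exp (-t) = 1) by (rewrite <- exp_plus; replace (t + - t) with 0 by ring; apply exp_0).
  assert (Hp : 0 < exp (-t)) by apply exp_pos.
  apply Rmult_le_compat_r with (r := exp (-t)) in H0; [|lra].
  rewrite Rmult_assoc, Hx in H0. lra.
Qed.

Lemma D_pos t : 0 <= t -> 0 < Di t.
Proof. intros H. assert (H1 := D_lower t H). assert (0 < exp (-t)) by apply exp_pos.
 assert (0 < Di 0 / 2 * exp (-t)) by (apply Rmult_lt_0_compat; lra). lra. Qed.

Lemma D_upper T : exists M, forall t, 0 <= t <= T -> Di t <= M.
Proof.
  destruct (Hrc 1 ltac:(lra)) as [del [Hdel Hd]].
  destruct (Rle_dec (del/2) T) as [HT|HT].
  - destruct (continuity_ab_maj Di (del/2) T HT) as [Mx [HM HMx]].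
    + intros c Hc. apply derivable_continuous_pt. exists (Qa c - Di c). apply Hder. lra.
    + exists (Rmax (Di 0 + 1) (Di Mx)). intros t Ht.
      destruct (Rle_dec (del/2) t).
      * eapply Rle_trans; [apply HM; lra| apply Rmax_r].
      * specialize (Hd t ltac:(lra)). apply Rabs_def2 in Hd.
        eapply Rle_trans; [|apply Rmax_l]. lra.
  - exists (Di 0 + 1). intros t Ht. specialize (Hd t ltac:(lra)). apply Rabs_def2 in Hd. lra.
Qed.
End Edge.

Lemma sum_upper m (f : nat -> R -> R) (P : R -> Prop) :
  (forall j, (j < m)%nat -> exists M, forall t, P t -> f j t <= M) ->
  exists M, forall t, P t -> sumR m (fun j => f j t) <= M.
Proof.
  induction m; intros H; simpl.
  - exists 0; intros; lra.
  - destruct IHm as [M1 H1]; [intros; apply H; lia|].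
    destruct (H m ltac:(lia)) as [M2 H2]. exists (M1 + M2). intros t Pt.
    specialize (H1 t Pt); specialize (H2 t Pt); lra.
Qed.

Lemma sum_lower m (f : nat -> R -> R) (P : R -> Prop) :
  (forall j, (j < m)%nat -> exists M, forall t, P t -> M <= f j t) ->
  exists M, forall t, P t -> M <= sumR m (fun j => f j t).
Proof.
  induction m; intros H; simpl.
  - exists 0; intros; lra.
  - destruct IHm as [M1 H1]; [intros; apply H; lia|].
    destruct (H m ltac:(lia)) as [M2 H2]. exists (M1 + M2). intros t Pt.
    specialize (H1 t Pt); specialize (H2 t Pt); lra.
Qed.

Theorem mainTheorem11 (n : nat) (E : list (nat * nat)) (L : nat -> R)
    (D : nat -> R -> R) (p : R -> nat -> R) (s0 s1 : nat)
    (vs es : list nat) (a b : nat) :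
  physarum n E L D p s0 s1 ->
  is_path n E vs es a b ->
  (forall t, 0 < t ->
     derivable_pt_lim (path_W L D es) t
       ((p t a - p t b) - path_length L es
        + 2 * sumR (length es) (fun j =>
            if Rlt_dec (path_edge_delta p vs t j) 0
            then Rabs (path_edge_delta p vs t j) else 0))) /\
  (forall Dbar delta, 0 <= delta ->
     (exists T, forall t, T <= t ->
        p t a - p t b <= Dbar /\
        forall j, (j < length es)%nat -> path_edge_delta p vs t j >= - delta) ->
     exists K, forall t, 0 <= t ->
       path_W L D es t <= K + (Dbar - path_length L es + 2 * INR n * delta) * t) /\
  (forall Dbar,
     (exists T, forall t, T <= t -> p t a - p t b >= Dbar) ->
     exists K, forall t, 0 <= t ->
       path_W L D es t >= K + (Dbar - path_length L es) * t).
Proof.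
  intros [Hsg [Hcon [Hs0 [Hs1 [Hs01 [HL [HD0 [Hrc [Hder Hkir]]]]]]]]]
         [Hlen [Hnd [Hvn [Ha [Hb Hadj]]]]].
  set (k := length es).
  set (ind := fun t j => if Rlt_dec (path_edge_delta p vs t j) 0
            then Rabs (path_edge_delta p vs t j) else 0).
  set (F := fun t => (p t a - p t b) - path_length L es + 2 * sumR k (ind t)).
  assert (Hder' : forall e, (e < length E)%nat -> forall t, 0 < t ->
     derivable_pt_lim (D e) t ((fun s => Rabs (current E L D p s e)) t - D e t)).
  { intros e He t Ht. apply Hder; auto. }
  assert (HQ : forall e t, 0 <= (fun s => Rabs (current E L D p s e)) t).
  { intros; apply Rabs_pos. }
  assert (Dpos : forall j, (j < k)%nat -> forall t, 0 <= t -> 0 < D (nth j es 0%nat) t).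
  { intros j Hj t Ht. destruct (Hadj j Hj) as [He _].
    exact (D_pos (D (nth j es 0%nat)) _ (HD0 _ He) (Hrc _ He) (Hder' _ He) (HQ _) t Ht). }
  assert (P1 : forall t, 0 < t -> derivable_pt_lim (path_W L D es) t (F t)).
  { intros t Ht. unfold path_W.
    assert (Hs : derivable_pt_lim (fun s => sumR k (fun j => (fun j s => L (nth j es 0%nat) * ln (D (nth j es 0%nat) s)) j s)) t
               (sumR k (fun j => Rabs (path_edge_delta p vs t j) - L (nth j es 0%nat)))).
    { apply sumR_deriv. intros j Hj. set (e := nth j es 0%nat).
      destruct (Hadj j Hj) as [He Hadj'].
      assert (HDp : 0 < D e t) by (apply Dpos; auto; lra).
      assert (HLp : 0 < L e) by (apply HL; auto).
      assert (H1 := derivable_pt_lim_comp (D e) ln t _ _ (Hder e He t Ht) (derivable_pt_lim_ln _ HDp)).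
      assert (H2 := derivable_pt_lim_scal _ (L e) t _ H1).
      replace (Rabs (path_edge_delta p vs t j) - L e) with
        (L e * (/ D e t * (Rabs (current E L D p t e) - D e t))).
      - exact H2.
      - unfold current. 
        replace (D e t * (p t (src E e) - p t (dst E e)) / L e) with
          ((D e t / L e) * (p t (src E e) - p t (dst E e))) by (field; lra).
        rewrite Rabs_mult, (Rabs_right (D e t / L e)) by (left; apply Rdiv_lt_0_compat; auto).
        replace (Rabs (p t (src E e) - p t (dst E e))) with (Rabs (path_edge_delta p vs t j)).
        + field; lra.
        + unfold path_edge_delta. destruct Hadj' as [[Hx Hy]|[Hx Hy]]; fold e in Hx, Hy;
            rewrite Hx, Hy; auto. apply Rabs_minus_sym. }
    replace (F t) with (sumR k (fun j => Rabs (path_edge_delta p vs t j) - L (nth j es 0%nat))).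
    - exact Hs.
    - unfold F. rewrite sumR_minus.
      rewrite (sumR_ext k (fun j => Rabs (path_edge_delta p vs t j))
                (fun j => (p t (nth j vs 0%nat) - p t (nth (S j) vs 0%nat)) + 2 * ind t j)).
      + rewrite sumR_plus, sumR_scal, (sumR_tele k (fun j => p t (nth j vs 0%nat))).
        rewrite <- Ha, <- Hb, last_nth_len, Hlen. simpl pred. unfold path_length. fold k. ring.
      + intros j Hj. unfold ind, path_edge_delta. destruct Rlt_dec.
        * rewrite Rabs_left; lra.
        * rewrite Rabs_right; lra. }
  assert (Bup : forall T, exists M, forall t, 0 <= t <= T -> path_W L D es t <= M).
  { intros T. unfold path_W. apply (sum_upper k (fun j t => L (nth j es 0%nat) * ln (D (nth j es 0%nat) t))).
    intros j Hj. destruct (Hadj j Hj) as [He _].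
    destruct (D_upper (D (nth j es 0%nat)) _ (Hrc _ He) (Hder' _ He) T) as [M HM].
    exists (L (nth j es 0%nat) * ln (Rmax M 1)). intros t Ht.
    apply Rmult_le_compat_l; [left; apply HL; auto|]. apply ln_le'. apply Dpos; auto; lra.
    eapply Rle_trans; [apply HM; auto| apply Rmax_l]. }
  assert (Blo : forall T, exists M, forall t, 0 <= t <= T -> M <= path_W L D es t).
  { intros T. unfold path_W. apply (sum_lower k (fun j t => L (nth j es 0%nat) * ln (D (nth j es 0%nat) t))).
    intros j Hj. destruct (Hadj j Hj) as [He _].
    assert (H0 := HD0 _ He).
    exists (L (nth j es 0%nat) * (ln (D (nth j es 0%nat) 0 / 2) - T)). intros t Ht.
    apply Rmult_le_compat_l; [left; apply HL; auto|].
    assert (Hl := D_lower (D (nth j es 0%nat)) _ H0 (Hrc _ He) (Hder' _ He) (HQ _) t ltac:(lra)).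
    assert (0 < exp (-t)) by apply exp_pos.
    assert (0 < D (nth j es 0%nat) 0 / 2 * exp (- t)) by (apply Rmult_lt_0_compat; lra).
    apply ln_le' in Hl; auto. rewrite ln_mult, ln_exp in Hl by lra. lra. }
  assert (Hkn : (k <= n)%nat).
  { assert (length vs <= length (seq 0 n))%nat.
    { apply NoDup_incl_length; auto. intros v Hv. apply in_seq. split; [lia|]. simpl. apply Hvn; auto. }
    rewrite length_seq in H. fold k in Hlen. lia. }
  split; [exact P1|split].
  - intros Dbar delta Hdel [T HT].
    set (C := Dbar - path_length L es + 2 * INR n * delta).
    set (T1 := Rmax T 1).
    assert (HT1 : T <= T1) by apply Rmax_l. assert (HT1' : 1 <= T1) by apply Rmax_r.
    destruct (Bup T1) as [B HB].
    exists (Rmax (path_W L D es T1 - C * T1) (B + Rabs C * T1)). intros t Ht.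
    destruct (Rle_dec t T1) as [Hle|Hgt].
    + assert (Hc : - Rabs C * T1 <= C * t).
      { destruct (Rle_dec 0 C). rewrite Rabs_right by lra. nra. rewrite Rabs_left by lra. nra. }
      specialize (HB t ltac:(lra)). assert (X := Rmax_r (path_W L D es T1 - C * T1) (B + Rabs C * T1)). nra.
    + destruct (MVT_cor2 (path_W L D es) F T1 t ltac:(lra)) as [c [Hc1 Hc2]].
      { intros c Hc. apply P1; lra. }
      assert (FC : F c <= C).
      { unfold F, C. destruct (HT c ltac:(lra)) as [Hd1 Hd2].
        assert (sumR k (ind c) <= INR n * delta).
        { apply Rle_trans with (sumR k (fun _ => delta)).
          - apply sumR_le. intros j Hj. specialize (Hd2 j Hj). unfold ind. destruct Rlt_dec.
            + rewrite Rabs_left; lra.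
            + lra.
          - rewrite sumR_const. apply Rmult_le_compat_r; auto. apply le_INR; auto. }
        lra. }
      assert (X := Rmax_l (path_W L D es T1 - C * T1) (B + Rabs C * T1)).
      assert (F c * (t - T1) <= C * (t - T1)) by (apply Rmult_le_compat_r; lra). nra.
  - intros Dbar [T HT].
    set (C := Dbar - path_length L es).
    set (T1 := Rmax T 1).
    assert (HT1 : T <= T1) by apply Rmax_l. assert (HT1' : 1 <= T1) by apply Rmax_r.
    destruct (Blo T1) as [B HB].
    exists (Rmin (path_W L D es T1 - C * T1) (B - Rabs C * T1)). intros t Ht.
    destruct (Rle_dec t T1) as [Hle|Hgt].
    + assert (Hc : C * t <= Rabs C * T1).
      { destruct (Rle_dec 0 C). rewrite Rabs_right by lra. nra. rewrite Rabs_left by lra. nra. }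
      specialize (HB t ltac:(lra)). assert (X := Rmin_r (path_W L D es T1 - C * T1) (B - Rabs C * T1)). nra.
    + destruct (MVT_cor2 (path_W L D es) F T1 t ltac:(lra)) as [c [Hc1 Hc2]].
      { intros c Hc. apply P1; lra. }
      assert (FC : C <= F c).
      { unfold F, C. specialize (HT c ltac:(lra)).
        assert (0 <= sumR k (ind c)).
        { rewrite <- (Rmult_0_r (INR k)), <- sumR_const. apply sumR_le. intros j Hj. unfold ind.
          destruct Rlt_dec; [apply Rabs_pos|lra]. }
        lra. }
      assert (X := Rmin_l (path_W L D es T1 - C * T1) (B - Rabs C * T1)).
      assert (C * (t - T1) <= F c * (t - T1)) by (apply Rmult_le_compat_r; lra). nra.
Qed.
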